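(* Let $K$ be a field and let $G_1, G_2$ be finite simple graphs. If the cut ideals of $G_1$ and $G_2$ admit squarefree Gröbner bases, then so does the cut ideal of their disjoint union $G_1 \sqcup G_2$.
   Context: For a finite simple graph $G$ with vertex set $V(G)$ and edge set $E(G)$, an unordered partition $A|B$ of $V(G)$ (into two sets, one of which may be empty) defines the cut $Cut(A|B)$, the set of edges with one endpoint in $A$ and the other in $B$. The cut ideal $I_G$ is the kernel of the $K$-algebra homomorphism $\phi_G: K[q_{A|B} : A|B \text{ unordered partition of } V(G)] \to K[s_{ij}, t_{ij} : \{i,j\} \in E(G)]$, $q_{A|B} \mapsto \prod_{\{i,j\}\in Cut(A|B)} s_{ij} \prod_{\{i,j\}\in E(G)\setminus Cut(A|B)} t_{ij}$. An ideal admits a squarefree Gröbner basis if, for some monomial order, it has a Gröbner basis consisting of binomials each of which is a difference of two squarefree monomials. *)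

(* Defs.v *)
From HB Require Import structures.
From mathcomp Require Import all_boot all_order all_algebra.
From mathcomp Require Import mpoly.
Set Implicit Arguments.
Unset Strict Implicit.
Unset Printing Implicit Defensive.
Import Order.TTheory GRing.Theory.
Local Open Scope ring_scope.

Definition simple_graph (V : finType) (e : rel V) : Prop :=
  ssrbool.symmetric e /\ irreflexive e.

Definition is_edge (V : finType) (e : rel V) : pred {set V} :=
  fun E => [exists i, exists j, e i j && (E == [set i; j])].
Definition edge (V : finType) (e : rel V) := {E : {set V} | is_edge e E}.

(* Unordered partitions A|B of V (B = complement of A; one block may be
   empty), represented as the set of blocks {A, V \ A}. *)
Definition is_upart (V : finType) : pred {set {set V}} :=
  fun P => [exists A : {set V}, P == [set A; ~: A]].
Definition upart (V : finType) := {P : {set {set V}} | is_upart P}.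

Definition in_cut (V : finType) (e : rel V) (P : upart V) (E : edge e) : bool :=
  [exists i in val E, exists j in val E, exists A in val P,
     (i \in A) && (j \notin A)].

Definition disj_union (V1 V2 : finType) (e1 : rel V1) (e2 : rel V2)
  : rel (V1 + V2)%type :=
  fun x y => match x, y with
             | inl a, inl b => e1 a b
             | inr a, inr b => e2 a b
             | _, _ => false
             end.

(* Number of variables q_{A|B}; the variable 'X_i corresponds to the
   unordered partition enum_val i. *)
Definition nq (V : finType) : nat := #|{: upart V}|.
(* Number of edges; the target ring K[s_E, t_E : E edge] is
   {mpoly K[ne + ne]}, s_E = 'X_(lshift (enum_rank E)),
   t_E = 'X_(rshift (enum_rank E)). *)
Definition ne (V : finType) (e : rel V) : nat := #|{: edge e}|.

Definition s_var (K : fieldType) (V : finType) (e : rel V) (E : edge e)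
  : {mpoly K[ne e + ne e]} := 'X_(lshift (ne e) (enum_rank E)).
Definition t_var (K : fieldType) (V : finType) (e : rel V) (E : edge e)
  : {mpoly K[ne e + ne e]} := 'X_(rshift (ne e) (enum_rank E)).

Definition phi_var (K : fieldType) (V : finType) (e : rel V) (i : 'I_(nq V))
  : {mpoly K[ne e + ne e]} :=
  \prod_(E : edge e)
     (if in_cut (enum_val i) E then s_var K E else t_var K E).

Definition phi (K : fieldType) (V : finType) (e : rel V)
  (p : {mpoly K[nq V]}) : {mpoly K[ne e + ne e]} :=
  mmap (fun c : K => c%:MP) (@phi_var K V e) p.

Definition cut_ideal (K : fieldType) (V : finType) (e : rel V)
  : pred {mpoly K[nq V]} :=
  fun p => phi e p == 0.

Definition monomial_order (n : nat) (le : rel 'X_{1..n}) : Prop :=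
  [/\ reflexive le, antisymmetric le, transitive le, total le &
      ((forall m, le 0%MM m) /\
       (forall m1 m2 m, le m1 m2 -> le (m1 + m)%MM (m2 + m)%MM))].

Definition is_lead (K : fieldType) (n : nat) (le : rel 'X_{1..n})
  (p : {mpoly K[n]}) (m : 'X_{1..n}) : Prop :=
  m \in msupp p /\ (forall m', m' \in msupp p -> le m' m).

(* gb is a Groebner basis of I w.r.t. le: gb is contained in I and the
   initial ideal in_le(I) is generated by the leading monomials of the
   elements of gb, i.e. every leading monomial of a nonzero element of I is
   divisible by the leading monomial of some element of gb. *)
Definition groebner_basis (K : fieldType) (n : nat) (le : rel 'X_{1..n})
  (I : pred {mpoly K[n]}) (gb : seq {mpoly K[n]}) : Prop :=
  (forall g, g \in gb -> g \in I) /\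
  (forall f mf, f \in I -> is_lead le f mf ->
     exists g, exists mg, [/\ g \in gb, is_lead le g mg & (mg <= mf)%MM]).

Definition sqfree_mnm (n : nat) (m : 'X_{1..n}) : bool :=
  [forall i, m i <= 1]%N.

Definition sqfree_binomial (K : fieldType) (n : nat) (g : {mpoly K[n]}) : Prop :=
  exists m1 m2 : 'X_{1..n},
    [/\ sqfree_mnm m1, sqfree_mnm m2 & g = 'X_[m1] - 'X_[m2]].

Definition has_sqfree_gb (K : fieldType) (n : nat) (I : pred {mpoly K[n]})
  : Prop :=
  exists le : rel 'X_{1..n}, exists gb : seq {mpoly K[n]},
    [/\ monomial_order le, groebner_basis le I gb
      & forall g, g \in gb -> sqfree_binomial g].

Arguments cut_ideal K {V} e.
Arguments phi K {V} e p.

(* Main.v *)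
Require Import Defs.
From HB Require Import structures.
From mathcomp Require Import all_boot all_order all_algebra.
From mathcomp Require Import mpoly.
From mathcomp Require Import zify.
Set Implicit Arguments.
Unset Strict Implicit.
Unset Printing Implicit Defensive.
Import Order.TTheory GRing.Theory.
Local Open Scope ring_scope.
Section Orders.
Variable n : nat.
Implicit Types (a b c m : 'X_{1..n}).

Definition lexF k (leA : rel 'X_{1..k}) (f : 'X_{1..n} -> 'X_{1..k})
  (leB : rel 'X_{1..n}) : rel 'X_{1..n} :=
  fun a b => if f a == f b then leB a b else leA (f a) (f b).

Definition lexW (w : 'X_{1..n} -> nat) (leB : rel 'X_{1..n}) : rel 'X_{1..n} :=
  fun a b => if w a == w b then leB a b else (w a < w b)%N.

Lemma mo_lexF k (leA : rel 'X_{1..k}) f leB :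
  monomial_order leA -> monomial_order leB ->
  f 0%MM = 0%MM -> (forall a b, f (a + b)%MM = (f a + f b)%MM) ->
  monomial_order (lexF leA f leB).
Proof.
move=> [rA aA tA toA [zA cA]] [rB aB tB toB [zB cB]] f0 fD.
split.
- by move=> a; rewrite /lexF eqxx.
- move=> a b /andP[]; rewrite /lexF eq_sym.
  case: eqP => [_ h1 h2|ne h1 h2]; first by apply: aB; rewrite h1 h2.
  by case: ne; apply: aA; rewrite h1 h2.
- move=> b a c; rewrite /lexF.
  case: (eqVneq (f a) (f b)) => [eab|nab]; case: (eqVneq (f b) (f c)) => [ebc|nbc].
  + by rewrite eab ebc eqxx; apply: tB.
  + by rewrite eab (negbTE nbc).
  + by rewrite -ebc (negbTE nab).
  + move=> h1 h2; case: (eqVneq (f a) (f c)) => [eac|nac].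
      by case/negP: nab; rewrite eac; apply/eqP/aA; rewrite h2 -eac h1.
    exact: tA h1 h2.
- move=> a b; rewrite /lexF eq_sym; case: eqP => _; [exact: toB| exact: toA].
- split.
  + by move=> m; rewrite /lexF f0; case: eqP => _; [exact: zB|exact: zA].
  + move=> a b m; rewrite /lexF !fD (inj_eq (@addIm _ (f m))).
    case: eqP => _; [exact: cB| exact: cA].
Qed.

Lemma mo_lexW (w : 'X_{1..n} -> nat) leB :
  monomial_order leB -> w 0%MM = 0%N -> (forall a b, w (a + b)%MM = (w a + w b)%N) ->
  monomial_order (lexW w leB).
Proof.
move=> [rB aB tB toB [zB cB]] w0 wD.
split.
- by move=> a; rewrite /lexW eqxx.
- move=> a b /andP[]; rewrite /lexW eq_sym.
  case: eqP => [_ h1 h2|ne h1 h2]; first by apply: aB; rewrite h1 h2.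
  by case: ne; lia.
- move=> b a c; rewrite /lexW.
  case: (eqVneq (w a) (w b)) => [eab|nab]; case: (eqVneq (w b) (w c)) => [ebc|nbc].
  + by rewrite eab ebc eqxx; apply: tB.
  + by rewrite eab (negbTE nbc).
  + by rewrite -ebc (negbTE nab).
  + move=> h1 h2; case: (eqVneq (w a) (w c)) => [eac|nac]; lia.
- move=> a b; rewrite /lexW eq_sym; case: eqP => ne; first exact: toB.
  lia.
- split.
  + by move=> m; rewrite /lexW w0; case: eqP => ne; [exact: zB|lia].
  + move=> a b m; rewrite /lexW !wD eqn_add2r.
    case: eqP => _; [exact: cB| lia].
Qed.

Definition Tord : rel 'X_{1..n} := fun a b => (a <= b)%O.

Lemma mo_Tord : monomial_order Tord.
Proof.
split.
- by move=> a; rewrite /Tord lexx.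
- by move=> a b; rewrite /Tord => /le_anti.
- by move=> b a c; rewrite /Tord; apply: le_trans.
- by move=> a b; rewrite /Tord le_total.
- split; first by move=> m; rewrite /Tord le0m.
  by move=> a b m; rewrite /Tord lemc_add2l.
Qed.

Lemma lexF_le k (leA : rel 'X_{1..k}) f leB a b :
  lexF leA f leB a b -> f a != f b -> leA (f a) (f b).
Proof. by rewrite /lexF; case: eqP. Qed.

Lemma lexW_le w leB a b : lexW w leB a b -> (w a <= w b)%N.
Proof. by rewrite /lexW; case: eqP => [->|_ /ltnW]. Qed.

End Orders.
Section Fib.
Variables (K : fieldType) (n k : nat) (psi : 'I_n -> 'X_{1..k}).
Variable h : 'I_n -> {mpoly K[k]}.
Hypothesis hE : forall i, h i = 'X_[psi i].

Definition Phi (m : 'X_{1..n}) : 'X_{1..k} := (\sum_(i < n) psi i *+ m i)%MM.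

Lemma mmap1X m : mmap1 h m = 'X_[Phi m].
Proof.
rewrite /mmap1 /Phi.
transitivity (\prod_(i < n) ('X_[psi i] : {mpoly K[k]}) ^+ m i).
  by apply: eq_bigr => i _; rewrite hE.
by rewrite mprodXnE.
Qed.

Definition mp (p : {mpoly K[n]}) := mmap (fun c : K => c%:MP) h p.

Lemma mpX m : mp 'X_[m] = 'X_[Phi m].
Proof.
by rewrite /mp /mmap msuppX big_seq1 mcoeffX eqxx mpolyC1 mul1r mmap1X.
Qed.

Lemma mp_coeff p mu : (mp p)@_mu = \sum_(m <- msupp p | Phi m == mu) p@_m.
Proof.
rewrite /mp /mmap (big_morph (mcoeff mu) (@mcoeffD _ _ mu) (@mcoeff0 _ _ mu)).
rewrite [RHS]big_mkcond /=. apply: eq_bigr => m _.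
rewrite mmap1X mcoeffCM mcoeffX; case: eqP => _; by rewrite ?mulr1 ?mulr0.
Qed.

Lemma coeff_bin (a b mu : 'X_{1..n}) :
  ('X_[a] - 'X_[b] : {mpoly K[n]})@_mu = (a == mu)%:R - (b == mu)%:R.
Proof. by rewrite mcoeffB !mcoeffX. Qed.

Lemma supp_bin (a b mu : 'X_{1..n}) : a != b ->
  (mu \in msupp ('X_[a] - 'X_[b] : {mpoly K[n]})) = (mu == a) || (mu == b).
Proof.
move=> nab; rewrite mcoeff_msupp coeff_bin (eq_sym mu a) (eq_sym mu b).
case: (a =P mu) => ea; case: (b =P mu) => eb.
- by case/eqP: nab; rewrite ea eb.
- by rewrite /= subr0 oner_eq0.
- by rewrite /= sub0r oppr_eq0 oner_eq0.
- by rewrite subrr eqxx.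
Qed.

Lemma Ibin (a b : 'X_{1..n}) : (mp ('X_[a] - 'X_[b]) == 0) = (Phi a == Phi b).
Proof.
rewrite /mp raddfB /= -/(mp _) -/(mp _) !mpX subr_eq0.
apply/eqP/eqP => [|->//] e.
have := congr1 (mcoeff (Phi a)) e; rewrite !mcoeffX eqxx.
by case: eqP => // _ /eqP; rewrite /= oner_eq0.
Qed.

Definition Pfib (T : Type) (F : 'X_{1..n} -> T) (le : rel 'X_{1..n}) :=
  forall m m', F m = F m' -> le m' m -> m' != m ->
  exists a b, [/\ sqfree_mnm a, sqfree_mnm b, (a <= m)%MM, F a = F b &
                  le b a && (b != a)].

Definition Iq : pred {mpoly K[n]} := fun p => mp p == 0.

Lemma GB_to_P : has_sqfree_gb Iq -> exists le, monomial_order le /\ Pfib Phi le.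
Proof.
move=> [le [gb [mo [gbI gbL] gbS]]]; exists le; split => // m m' ePhi lem' nm.
have nm2 : m != m' by rewrite eq_sym.
have fI : Iq ('X_[m] - 'X_[m']) by rewrite /Iq Ibin ePhi.
have fL : is_lead le ('X_[m] - 'X_[m'] : {mpoly K[n]}) m.
  case: mo => rf _ _ _ _.
  split; first by rewrite supp_bin // eqxx.
  by move=> mu; rewrite supp_bin // => /orP[]/eqP->.
have [g [mg [ging [mgs mgL] mgle]]] := gbL _ _ fI fL.
have [a [b [sa sb ge]]] := gbS _ ging.
have gI : Iq g := gbI _ ging; move: gI; rewrite /Iq ge Ibin => /eqP ePab.
have nab : a != b.
  apply/eqP => eab; move: mgs; by rewrite ge eab subrr msupp0.
move: (mgs); rewrite ge supp_bin // => /orP[]/eqP emg.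
- exists a, b; split => //; first by rewrite -emg.
  rewrite eq_sym nab andbT -emg; apply: mgL; by rewrite ge supp_bin // eqxx orbT.
- exists b, a; split => //; first by rewrite -emg.
  rewrite nab andbT -emg; apply: mgL; by rewrite ge supp_bin // eqxx.
Qed.

Definition mkm (f : {ffun 'I_n -> bool}) : 'X_{1..n} := [multinom (f i : nat) | i < n].

Lemma sqfree_mkm f : sqfree_mnm (mkm f).
Proof. by apply/forallP => i; rewrite mnmE; case: (f i). Qed.

Lemma mkm_sqfree a : sqfree_mnm a -> a = mkm [ffun i => a i == 1%N].
Proof.
move/forallP => sa; apply/mnmP => i; rewrite mnmE ffunE.
by have := sa i; case: (a i) => [|[]].
Qed.

Lemma P_to_GB le : monomial_order le -> Pfib Phi le -> has_sqfree_gb Iq.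
Proof.
move=> mo P; have [rf _ _ _ _] := mo.
pose cond (x : {ffun 'I_n -> bool} * {ffun 'I_n -> bool}) :=
  (Phi (mkm x.1) == Phi (mkm x.2)) && le (mkm x.2) (mkm x.1) && (mkm x.2 != mkm x.1).
pose gb := [seq ('X_[mkm x.1] - 'X_[mkm x.2] : {mpoly K[n]}) | x <- enum cond].
exists le, gb; split => //; last first.
  move=> g /mapP[x]; rewrite mem_enum => _ ->.
  by exists (mkm x.1), (mkm x.2); split => //; apply: sqfree_mkm.
split.
  move=> g /mapP[x]; rewrite mem_enum => /andP[/andP[/eqP e _] _] ->.
  by rewrite unfold_in /Iq Ibin e.
move=> f mf fI [mfs mfL].
have [m' [m's nm' em']] : exists m', [/\ m' \in msupp f, m' != mf & Phi m' = Phi mf].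
  case: (boolP (has (fun m' => (m' != mf) && (Phi m' == Phi mf)) (msupp f))).
    by case/hasP => m' ms /andP[ne /eqP e]; exists m'.
  move/hasPn => H; exfalso.
  have : (mp f)@_(Phi mf) = 0 by move: fI; rewrite unfold_in /Iq => /eqP ->; rewrite mcoeff0.
  rewrite mp_coeff big_mkcond (bigD1_seq mf) ?msupp_uniq //= eqxx big1_seq ?addr0.
    by move/eqP; rewrite mcoeff_eq0 mfs.
  move=> m /andP[ne mm]; have := H m mm; rewrite ne /=; by case: eqP.
have lm' : le m' mf by apply: mfL.
have [a [b [sa sb amf eab /andP[lba nba]]]] := P mf m' (esym em') lm' nm'.
have nab : a != b by rewrite eq_sym.
exists ('X_[a] - 'X_[b]), a; split => //.
- have ea : mkm [ffun i => a i == 1%N] = a := esym (mkm_sqfree sa).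
  have eb : mkm [ffun i => b i == 1%N] = b := esym (mkm_sqfree sb).
  apply/mapP; exists ([ffun i => a i == 1%N], [ffun i => b i == 1%N]); last first.
    by rewrite /= ea eb.
  by rewrite mem_enum unfold_in /= ea eb eab eqxx lba nba.
- split; first by rewrite supp_bin // eqxx.
  by move=> mu; rewrite supp_bin // => /orP[]/eqP->.
Qed.
End Fib.
Section Push.
Variables (n k : nat) (r : 'I_n -> 'I_k).
Implicit Types (m a b : 'X_{1..n}).

Definition push m : 'X_{1..k} := [multinom (\sum_(i < n | r i == j) m i)%N | j < k].

Lemma pushE m j : push m j = (\sum_(i < n | r i == j) m i)%N.
Proof. by rewrite mnmE. Qed.

Lemma push0 : push 0%MM = 0%MM.
Proof. by apply/mnmP => j; rewrite pushE mnm0E big1 // => i _; rewrite mnm0E. Qed.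

Lemma pushD a b : push (a + b)%MM = (push a + push b)%MM.
Proof.
apply/mnmP => j; rewrite mnmDE !pushE -big_split /=.
by apply: eq_bigr => i _; rewrite mnmDE.
Qed.

Lemma pushU i : push U_(i)%MM = U_(r i)%MM.
Proof.
apply/mnmP => j; rewrite pushE mnm1E.
case: (eqVneq (r i) j) => [<-|ne].
  rewrite (bigD1 i) //= big1 ?addn0 ?mnm1E ?eqxx //.
  by move=> t /andP[_ ne]; rewrite mnm1E eq_sym (negbTE ne).
by rewrite big1 // => t /eqP rt; rewrite mnm1E; case: eqP => // e; case/eqP: ne; rewrite e rt.
Qed.

Lemma push_mdeg m : mdeg (push m) = mdeg m.
Proof.
rewrite !mdegE (partition_big r xpredT) //=.
by apply: eq_bigr => j _; rewrite pushE.
Qed.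

Lemma push_ge m i : (m i <= push m (r i))%N.
Proof. by rewrite pushE (bigD1 i) //= leq_addr. Qed.

Lemma push_pos m j : (0 < push m j)%N -> exists i, r i = j /\ (0 < m i)%N.
Proof.
rewrite pushE => H.
case: (boolP [exists i, (r i == j) && (0 < m i)%N]) => [/existsP[i /andP[/eqP ? ?]]|/existsPn H2].
  by exists i.
move: H; rewrite big1 // => i /eqP ri; have := H2 i; rewrite ri eqxx /=.
by rewrite lt0n negbK => /eqP.
Qed.

Lemma push_zero m j i : push m j = 0%N -> r i = j -> m i = 0%N.
Proof. by move=> H ri; have := push_ge m i; rewrite ri H; case: (m i). Qed.

End Push.

Lemma sqfreeP n (a : 'X_{1..n}) : reflect (forall i, (a i <= 1)%N) (sqfree_mnm a).
Proof. exact: forallP. Qed.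

Lemma lemP n (a b : 'X_{1..n}) : reflect (forall i, (a i <= b i)%N) (a <= b)%MM.
Proof. exact: mnm_lepP. Qed.

Lemma mnm_ne0 n (m : 'X_{1..n}) : m != 0%MM -> exists i, (0 < m i)%N.
Proof.
move=> nz; case: (boolP [exists i, (0 < m i)%N]) => [/existsP[i ?]|/existsPn H].
  by exists i.
case/eqP: nz.
by apply/mnmP => i; rewrite mnm0E; have := H i; rewrite lt0n negbK => /eqP.
Qed.

Section Lift.
Variables (n k k' : nat) (r : 'I_n -> 'I_k) (r' : 'I_n -> 'I_k').
Variable sec : 'I_k -> 'I_k' -> 'I_n.
Hypotheses (H1 : forall x y, r (sec x y) = x) (H2 : forall x y, r' (sec x y) = y).

Lemma lift (m : 'X_{1..n}) d : forall (a1 b1 : 'X_{1..k}),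
  mdeg a1 = d -> mdeg b1 = d -> sqfree_mnm a1 -> sqfree_mnm b1 ->
  (a1 <= push r m)%MM ->
  exists a b : 'X_{1..n}, [/\ sqfree_mnm a, sqfree_mnm b, (a <= m)%MM, push r a = a1 &
     push r b = b1 /\ push r' b = push r' a].
Proof.
elim: d => [|d IH] a1 b1 da db sa sb am.
  move/eqP: da; rewrite mdeg_eq0 => /eqP ->; move/eqP: db; rewrite mdeg_eq0 => /eqP ->.
  exists 0%MM, 0%MM; split => //.
  - by apply/sqfreeP => i; rewrite mnm0E.
  - by apply/sqfreeP => i; rewrite mnm0E.
  - by apply/lemP => i; rewrite mnm0E.
  - exact: push0.
  - by rewrite !push0.
have [j aj] : exists j, (0 < a1 j)%N.
  by apply: mnm_ne0; rewrite -mdeg_eq0 da.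
have [j' bj] : exists j, (0 < b1 j)%N.
  by apply: mnm_ne0; rewrite -mdeg_eq0 db.
have aj1 : a1 j = 1%N by move/sqfreeP: sa => /(_ j); lia.
have bj1 : b1 j' = 1%N by move/sqfreeP: sb => /(_ j'); lia.
set a1' := (a1 - U_(j))%MM; set b1' := (b1 - U_(j'))%MM.
have ea1 : a1 = (a1' + U_(j))%MM by rewrite submK // lep1mP -lt0n.
have eb1 : b1 = (b1' + U_(j'))%MM by rewrite submK // lep1mP -lt0n.
have da' : mdeg a1' = d by move: da; rewrite ea1 mdegD mdeg1 addn1 => -[].
have db' : mdeg b1' = d by move: db; rewrite eb1 mdegD mdeg1 addn1 => -[].
have sa' : sqfree_mnm a1'.
  by apply/sqfreeP => t; rewrite mnmBE; move/sqfreeP: sa => /(_ t); lia.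
have sb' : sqfree_mnm b1'.
  by apply/sqfreeP => t; rewrite mnmBE; move/sqfreeP: sb => /(_ t); lia.
have am' : (a1' <= push r m)%MM.
  by apply: lepm_trans am; rewrite /a1' lem_subr.
have [a' [b' [sa'' sb'' a'm pa' [pb' pb'']]]] := IH a1' b1' da' db' sa' sb' am'.
have a1'j : a1' j = 0%N by rewrite mnmBE mnm1E eqxx aj1.
have b1'j : b1' j' = 0%N by rewrite mnmBE mnm1E eqxx bj1.
have [i [ri mi]] : exists i, r i = j /\ (0 < m i)%N.
  apply: push_pos; move/lemP: am => /(_ j); lia.
have a'i : a' i = 0%N by apply: (push_zero (r := r)) ri; rewrite pa'.
set x := sec j' (r' i).
have b'x : b' x = 0%N by apply: (push_zero (r := r)) (H1 _ _); rewrite pb'.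
exists (a' + U_(i))%MM, (b' + U_(x))%MM; split.
- apply/sqfreeP => t; rewrite mnmDE mnm1E; case: eqP => [<-|_]; first by rewrite a'i.
  by rewrite addn0; move/sqfreeP: sa''.
- apply/sqfreeP => t; rewrite mnmDE mnm1E; case: eqP => [<-|_]; first by rewrite b'x.
  by rewrite addn0; move/sqfreeP: sb''.
- apply/lemP => t; rewrite mnmDE mnm1E; case: eqP => [<-|_]; first by rewrite a'i.
  by rewrite addn0; move/lemP: a'm.
- by rewrite pushD pushU pa' ri ea1.
- by rewrite !pushD !pushU pb' pb'' H1 H2 eb1.
Qed.
End Lift.
Lemma ex_min_ord k (P : pred 'I_k) : (exists j, P j) ->
  exists j, P j /\ forall j', P j' -> (j <= j')%N.
Proof.
move=> [j Pj]; case: (arg_minnP (fun j : 'I_k => nat_of_ord j) Pj) => j0 P0 H.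
by exists j0.
Qed.

Section Core.
Variables n n1 n2 : nat.
Variables (r1 : 'I_n -> 'I_n1) (r2 : 'I_n -> 'I_n2) (s : 'I_n1 -> 'I_n2 -> 'I_n).
Hypotheses (rs1 : forall a b, r1 (s a b) = a) (rs2 : forall a b, r2 (s a b) = b).
Implicit Types (m a b : 'X_{1..n}).

Definition canon i := s (r1 i) (r2 i) == i.
Definition nc m := (\sum_(i < n | ~~ canon i) m i)%N.
Definition W m := (\sum_(i < n) m i * (r1 i * (n2 - r2 i)))%N.

Lemma canon_s x y : canon (s x y).
Proof. by rewrite /canon rs1 rs2. Qed.

Lemma nc0 : nc 0%MM = 0%N.
Proof. by rewrite /nc big1 // => i _; rewrite mnm0E. Qed.
Lemma ncD a b : nc (a + b)%MM = (nc a + nc b)%N.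
Proof. by rewrite /nc -big_split; apply: eq_bigr => i _; rewrite mnmDE. Qed.
Lemma W0 : W 0%MM = 0%N.
Proof. by rewrite /W big1 // => i _; rewrite mnm0E. Qed.
Lemma WD a b : W (a + b)%MM = (W a + W b)%N.
Proof. by rewrite /W -big_split; apply: eq_bigr => i _; rewrite mnmDE mulnDl. Qed.
Lemma ncU i : nc U_(i)%MM = (~~ canon i : nat).
Proof.
rewrite /nc; case: (boolP (canon i)) => ci /=.
  by rewrite big1 // => t ct; rewrite mnm1E; case: eqP => // e; rewrite -e ci in ct.
rewrite (bigD1 i) //= big1 ?mnm1E ?eqxx // => t /andP[_ ne].
by rewrite mnm1E eq_sym (negbTE ne).
Qed.
Lemma WU i : W U_(i)%MM = (r1 i * (n2 - r2 i))%N.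
Proof.
rewrite /W (bigD1 i) //= big1 ?mnm1E ?eqxx ?mul1n ?addn0 // => t ne.
by rewrite mnm1E eq_sym (negbTE ne).
Qed.

Definition allc m := forall i, (0 < m i)%N -> canon i.
Definition crossb m := [exists i, exists k, [&& (0 < m i)%N, (0 < m k)%N,
                          (r1 i < r1 k)%N & (r2 k < r2 i)%N]].

Lemma nocrossP m : ~~ crossb m -> forall i k, (0 < m i)%N -> (0 < m k)%N ->
  (r1 i < r1 k)%N -> (r2 i <= r2 k)%N.
Proof.
move=> /existsPn H i k mi mk lt; have /existsPn := H i; move/(_ k).
by rewrite mi mk lt /= -leqNgt.
Qed.

Lemma allc_le m m0 : allc m -> (m0 <= m)%MM -> allc m0.
Proof. by move=> H /lemP le i mi; apply: H; apply: leq_trans mi (le i). Qed.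

Lemma nocross_le m m0 : ~~ crossb m -> (m0 <= m)%MM -> ~~ crossb m0.
Proof.
move=> H /lemP le; apply/existsPn => i; apply/existsPn => k.
apply/negP => /and4P[mi mk l1 l2].
have := nocrossP H (leq_trans mi (le i)) (leq_trans mk (le k)) l1; lia.
Qed.

Lemma allc_nc m : allc m -> nc m = 0%N.
Proof.
move=> H; rewrite /nc big1 // => i ci; apply/eqP; rewrite -leqn0 leqNgt.
by apply/negP => /H; rewrite (negbTE ci).
Qed.

Lemma nc_allc m : nc m = 0%N -> allc m.
Proof.
move=> H i mi; apply/negPn/negP => ci.
have : (m i <= nc m)%N by rewrite /nc (bigD1 i) //= leq_addr.
by rewrite H; lia.
Qed.

Section Cross.
Variables i k : 'I_n.
Hypotheses (l1 : (r1 i < r1 k)%N) (l2 : (r2 k < r2 i)%N).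
Definition ca := (U_(i) + U_(k))%MM.
Definition cb := (U_(s (r1 i) (r2 k)) + U_(s (r1 k) (r2 i)))%MM.

Lemma cross_ne : i != k.
Proof. by apply/eqP => e; move: l1; rewrite e ltnn. Qed.
Lemma cross_ne' : s (r1 i) (r2 k) != s (r1 k) (r2 i).
Proof. by apply/eqP => /(congr1 r1); rewrite !rs1 => e; move: l1; rewrite e ltnn. Qed.

Lemma cb_p1 : push r1 cb = push r1 ca.
Proof. by rewrite /ca /cb !pushD !pushU !rs1. Qed.
Lemma cb_p2 : push r2 cb = push r2 ca.
Proof. by rewrite /ca /cb !pushD !pushU !rs2 addmC. Qed.
Lemma W_cross : (W cb < W ca)%N.
Proof.
rewrite /ca /cb !WD !WU !rs1 !rs2.
have := ltn_ord (r2 i); have := ltn_ord (r2 k).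
move: l1 l2; set p := nat_of_ord (r1 i); set p' := nat_of_ord (r1 k).
set q := nat_of_ord (r2 i); set q' := nat_of_ord (r2 k) => L1 L2 L3 L4.
have -> : (n2 - q' = (n2 - q) + (q - q'))%N by lia.
rewrite !mulnDr; set x := (n2 - q)%N; set y := (q - q')%N.
have : (0 < y)%N by rewrite /y; lia.
nia.
Qed.
Lemma nc_cb : nc cb = 0%N.
Proof. by rewrite /cb ncD !ncU !canon_s. Qed.
Lemma sq_ca : sqfree_mnm ca.
Proof.
apply/sqfreeP => t; rewrite /ca mnmDE !mnm1E.
by move: cross_ne; case: (i =P t) => [->|_]; case: (k =P t) => [->|_] //; rewrite eqxx.
Qed.
Lemma sq_cb : sqfree_mnm cb.
Proof.
apply/sqfreeP => t; rewrite /cb mnmDE !mnm1E.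
move: cross_ne'; case: (_ =P t) => [->|_]; case: (_ =P t) => [->|_] //; by rewrite eqxx.
Qed.
Lemma ca_le m : (0 < m i)%N -> (0 < m k)%N -> (ca <= m)%MM.
Proof.
move=> mi mk; apply/lemP => t; rewrite /ca mnmDE !mnm1E.
move: cross_ne mi mk; case: (i =P t) => [->|_]; case: (k =P t) => [->|_];
  rewrite ?eqxx //= => *; lia.
Qed.
Lemma allc_cb : allc cb.
Proof.
move=> t; rewrite /cb mnmDE !mnm1E.
case: (eqVneq (s (r1 i) (r2 k)) t) => [<- _|_]; first exact: canon_s.
by case: (eqVneq (s (r1 k) (r2 i)) t) => [<- _|//]; apply: canon_s.
Qed.
End Cross.

Lemma swap m : allc m -> crossb m -> exists m2, [/\ allc m2, push r1 m2 = push r1 m,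
  push r2 m2 = push r2 m & (W m2 < W m)%N].
Proof.
move=> am /existsP[i /existsP[k /and4P[mi mk L1 L2]]].
have cal := ca_le L1 mi mk.
exists ((m - ca i k) + cb i k)%MM; split.
- move=> t; rewrite mnmDE addn_gt0 => /orP[h|h].
    by apply: am; move: h; rewrite mnmBE; lia.
  exact: allc_cb h.
- by rewrite pushD cb_p1 -pushD submK.
- by rewrite pushD cb_p2 -pushD submK.
- have := W_cross L1 L2; rewrite -{2}(submK cal) !WD; lia.
Qed.

Lemma corner m p0 q0 : allc m -> ~~ crossb m ->
  (0 < push r1 m p0)%N -> (forall j, (0 < push r1 m j)%N -> (p0 <= j)%N) ->
  (0 < push r2 m q0)%N -> (forall j, (0 < push r2 m j)%N -> (q0 <= j)%N) ->
  (0 < m (s p0 q0))%N.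
Proof.
move=> am ncr hp minp hq minq.
have [k [rk mk]] := push_pos hp; have [i [ri mi]] := push_pos hq.
have ck := am k mk; have ci := am i mi.
have qk : (q0 <= r2 k)%N by apply: minq; apply: leq_trans mk (push_ge _ _ _).
case: (ltnP p0 (r1 i)) => hpi.
- have := nocrossP ncr mk mi; rewrite rk => /(_ hpi); rewrite ri => h.
  have e : r2 k = q0 by apply/val_inj/eqP; rewrite eqn_leq h qk.
  by move/eqP: ck; rewrite rk e => ->.
- have pi : (p0 <= r1 i)%N by apply: minp; apply: leq_trans mi (push_ge _ _ _).
  have e : r1 i = p0 by apply/val_inj/eqP; rewrite eqn_leq hpi pi.
  by move/eqP: ci; rewrite e ri => ->.
Qed.

Lemma uniq_cpl d : forall m m', mdeg m = d -> allc m -> allc m' ->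
  ~~ crossb m -> ~~ crossb m' -> push r1 m = push r1 m' -> push r2 m = push r2 m' -> m = m'.
Proof.
elim: d => [|d IH] m m' dm am am' cm cm' e1 e2.
  have : mdeg m' = 0%N by rewrite -(push_mdeg r1) -e1 push_mdeg.
  move/eqP: dm; rewrite mdeg_eq0 => /eqP ->; by move/eqP; rewrite mdeg_eq0 => /eqP ->.
have [t mt] : exists t, (0 < m t)%N by apply: mnm_ne0; rewrite -mdeg_eq0 dm.
have [p0 [hp minp]] := ex_min_ord (ex_intro (fun j => (0 < push r1 m j)%N) (r1 t)
   (leq_trans mt (push_ge r1 m t))).
have [q0 [hq minq]] := ex_min_ord (ex_intro (fun j => (0 < push r2 m j)%N) (r2 t)
   (leq_trans mt (push_ge r2 m t))).
have c1 := corner am cm hp minp hq minq.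
have c2 : (0 < m' (s p0 q0))%N.
  by apply: corner; rewrite -?e1 -?e2.
set x := s p0 q0 in c1 c2.
have ex : (U_(x) <= m)%MM by rewrite lep1mP -lt0n.
have ex' : (U_(x) <= m')%MM by rewrite lep1mP -lt0n.
have E : (m - U_(x))%MM = (m' - U_(x))%MM.
  apply: IH.
  - by move: dm; rewrite -{1}(submK ex) mdegD mdeg1 addn1 => -[].
  - exact: allc_le am (lem_subr _ _).
  - exact: allc_le am' (lem_subr _ _).
  - exact: nocross_le cm (lem_subr _ _).
  - exact: nocross_le cm' (lem_subr _ _).
  - by apply: (@addIm _ (push r1 U_(x))); rewrite -!pushD !submK.
  - by apply: (@addIm _ (push r2 U_(x))); rewrite -!pushD !submK.
by rewrite -(submK ex) -(submK ex') E.
Qed.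

Lemma Wmin m : allc m -> ~~ crossb m -> forall w m', (W m' < w)%N -> allc m' ->
  push r1 m' = push r1 m -> push r2 m' = push r2 m -> (W m <= W m')%N.
Proof.
move=> am cm; elim => [|w IH] m' hw am' e1 e2; first by [].
case: (boolP (crossb m')) => cm'.
  have [m2 [a2 f1 f2 lt]] := swap am' cm'.
  have := IH m2 _ a2; rewrite f1 f2 => /(_ _ e1 e2) h.
  have : (W m <= W m2)%N by apply: h; lia.
  lia.
by rewrite (uniq_cpl (erefl _) am am' cm cm' (esym e1) (esym e2)).
Qed.

Variables (T1 T2 : Type) (F1 : 'X_{1..n1} -> T1) (F2 : 'X_{1..n2} -> T2).
Variables (le1 : rel 'X_{1..n1}) (le2 : rel 'X_{1..n2}).
Hypotheses (homog1 : forall x y : 'X_{1..n1}, F1 x = F1 y -> mdeg x = mdeg y)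
           (homog2 : forall x y : 'X_{1..n2}, F2 x = F2 y -> mdeg x = mdeg y).
Hypotheses (P1 : Pfib F1 le1) (P2 : Pfib F2 le2).

Definition Fc m := (F1 (push r1 m), F2 (push r2 m)).
Definition lec := lexF le1 (push r1) (lexF le2 (push r2) (lexW nc (lexW W (@Tord n)))).

Lemma mo_lec : monomial_order le1 -> monomial_order le2 -> monomial_order lec.
Proof.
move=> m1 m2; apply: mo_lexF => //; [|exact: push0|exact: pushD].
apply: mo_lexF => //; [|exact: push0|exact: pushD].
apply: mo_lexW; [|exact: nc0|exact: ncD].
apply: mo_lexW; [exact: mo_Tord|exact: W0|exact: WD].
Qed.

Lemma sqU i : sqfree_mnm (U_(i) : 'X_{1..n})%MM.
Proof. by apply/sqfreeP => t; rewrite mnm1E; case: (_ == _). Qed.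

Theorem core : Pfib Fc lec.
Proof.
move=> m m' eF lm nm.
have eF1 : F1 (push r1 m) = F1 (push r1 m') := congr1 fst eF.
have eF2 : F2 (push r2 m) = F2 (push r2 m') := congr1 snd eF.
case: (boolP [exists i, (0 < m i)%N && ~~ canon i]).
  case/existsP => i /andP[mi ci]; set y := s (r1 i) (r2 i).
  have ny : y != i by [].
  exists U_(i)%MM, U_(y)%MM; split.
  - exact: sqU.
  - exact: sqU.
  - by rewrite lep1mP -lt0n.
  - by rewrite /Fc !pushU /y rs1 rs2.
  - rewrite /lec /lexF !pushU /y rs1 rs2 !eqxx /lexW !ncU canon_s (negbTE ci) /=.
    by rewrite eq_mnm1.
move/existsPn => H.
have am : allc m by move=> i mi; have := H i; rewrite mi /= negbK.
have ncm := allc_nc am.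
case: (boolP (crossb m)) => cm.
  case/existsP: cm => i /existsP[k /and4P[mi mk L1 L2]].
  have cal := ca_le L1 mi mk.
  have wc := W_cross L1 L2.
  exists (ca i k), (cb i k); split.
  - exact: sq_ca L1.
  - exact: sq_cb L1.
  - exact: cal.
  - by rewrite /Fc cb_p1 cb_p2.
  - rewrite /lec /lexF cb_p1 cb_p2 eqxx /lexW nc_cb (allc_nc (allc_le am cal)) eqxx.
    rewrite (ltn_eqF wc) wc /=; apply/eqP => e; move: wc; by rewrite e ltnn.
move: lm; rewrite /lec /lexF.
case: (eqVneq (push r1 m') (push r1 m)) => e1; last first.
  move=> l1'.
  have [a1 [b1 [sa1 sb1 a1m eab1 /andP[lb1 nb1]]]] := P1 eF1 l1' e1.
  have d1 := homog1 eab1.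
  have [a [b [sa sb am_ pa [pb pb']]]] := lift rs1 rs2 (erefl _) (esym d1) sa1 sb1 a1m.
  exists a, b; split => //; first by rewrite /Fc pb' pb pa eab1.
  rewrite pb pa (negbTE nb1) lb1 /=; apply/eqP => e; move: nb1; by rewrite -pb -pa e eqxx.
case: (eqVneq (push r2 m') (push r2 m)) => e2; last first.
  move=> l2'.
  have [a2 [b2 [sa2 sb2 a2m eab2 /andP[lb2 nb2]]]] := P2 eF2 l2' e2.
  have d2 := homog2 eab2.
  have [a [b [sa sb am_ pa [pb pb']]]] :=
    lift (r := r2) (r' := r1) (sec := fun x y => s y x) (fun x y => rs2 y x)
      (fun x y => rs1 y x) (erefl _) (esym d2) sa2 sb2 a2m.
  exists a, b; split => //; first by rewrite /Fc pb' pb pa eab2.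
  rewrite pb' eqxx pb pa (negbTE nb2) lb2 /=; apply/eqP => e; move: nb2; by rewrite -pb -pa e eqxx.
move=> lw.
have ncm' : nc m' = 0%N by have := lexW_le lw; rewrite ncm; lia.
have am' := nc_allc ncm'.
move: lw; rewrite /lexW ncm ncm' eqxx => lw.
have w1 := lexW_le lw.
have w2 := Wmin am cm (ltnSn (W m')) am' e1 e2.
case: (boolP (crossb m')) => cm'.
  have [m2 [a2 f1 f2 lt]] := swap am' cm'.
  have := Wmin am cm (ltnSn (W m2)) a2; rewrite f1 f2 => /(_ e1 e2); lia.
by case/eqP: nm; apply: (uniq_cpl (erefl _) am' am cm' cm).
Qed.
End Core.
Lemma Pfib_eqv n (T T' : Type) (F : 'X_{1..n} -> T) (G : 'X_{1..n} -> T') le :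
  (forall x y, F x = F y <-> G x = G y) -> Pfib F le -> Pfib G le.
Proof.
move=> E P m m' eG lm nm; have [a [b [sa sb am eF l]]] := P m m' (proj2 (E _ _) eG) lm nm.
by exists a, b; split => //; apply/E.
Qed.

Section Deg.
Variables (n : nat) (z : 'I_n).
Hypothesis hz : nat_of_ord z = 0%N.
Implicit Types (m a b : 'X_{1..n}).

Definition wsum m := (\sum_(i < n) m i * i)%N.
Lemma wsum0 : wsum 0%MM = 0%N.
Proof. by rewrite /wsum big1 // => i _; rewrite mnm0E. Qed.
Lemma wsumD a b : wsum (a + b)%MM = (wsum a + wsum b)%N.
Proof. by rewrite /wsum -big_split; apply: eq_bigr => i _; rewrite mnmDE mulnDl. Qed.
Lemma wsumU i : wsum U_(i)%MM = i.
Proof.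
rewrite /wsum (bigD1 i) //= big1 ?mnm1E ?eqxx ?mul1n ?addn0 // => t ne.
by rewrite mnm1E eq_sym (negbTE ne).
Qed.

Definition le0 := lexW (@mdeg n) (lexW wsum (@Tord n)).
Lemma mo_le0 : monomial_order le0.
Proof.
apply: mo_lexW; [|exact: mdeg0|exact: mdegD].
apply: mo_lexW; [exact: mo_Tord|exact: wsum0|exact: wsumD].
Qed.

Lemma Pdeg : Pfib (@mdeg n) le0.
Proof.
move=> m m' ed lm nm.
case: (boolP [exists i, (0 < m i)%N && (0 < i)%N]).
  case/existsP => i /andP[mi ip].
  have nz : z != i by apply/eqP => e; move: ip; rewrite -e hz.
  exists U_(i)%MM, U_(z)%MM; split.
  - exact: sqU.
  - exact: sqU.
  - by rewrite lep1mP -lt0n.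
  - by rewrite !mdeg1.
  - rewrite /le0 /lexW !mdeg1 eqxx !wsumU hz eq_sym (negbTE (lt0n_neq0 ip)) ip /=.
    by rewrite eq_mnm1.
move/existsPn => H.
have Z : forall i, (0 < m i)%N -> i = z.
  move=> i mi; apply/val_inj; rewrite /= hz; have := H i; rewrite mi /=; lia.
have ws : wsum m = 0%N.
  rewrite /wsum big1 // => i _; case: (posnP (m i)) => [->//|/Z ->]; by rewrite hz muln0.
move: lm; rewrite /le0 /lexW ed eqxx => lm; have := lexW_le lm; rewrite ws leqn0 => /eqP ws'.
have Z' : forall i, (0 < m' i)%N -> i = z.
  move=> i mi; apply/val_inj; rewrite /= hz.
  have : (m' i * i <= wsum m')%N by rewrite /wsum (bigD1 i) //= leq_addr.
  rewrite ws'; nia.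
have key : forall mm : 'X_{1..n}, (forall i, (0 < mm i)%N -> i = z) -> mm = (U_(z) *+ mdeg mm)%MM.
  move=> mm Hm; apply/mnmP => j; rewrite mulmnE mnm1E mdegE (bigD1 z) //= big1 ?addn0.
    case: eqP => [<-|ne]; first by rewrite mul1n.
    by case: (posnP (mm j)) => // /Hm e; case: ne.
  by move=> i ne; case: (posnP (mm i)) => // /Hm e; rewrite e eqxx in ne.
by case/eqP: nm; rewrite (key _ Z) (key _ Z') ed.
Qed.
End Deg.
Section Graph.
Variables (V : finType) (e : rel V).

Definition psiG (i : 'I_(nq V)) : 'X_{1..ne e + ne e} :=
  (\sum_(E : edge e) (if in_cut (enum_val i) E then U_(lshift (ne e) (enum_rank E))
                     else U_(rshift (ne e) (enum_rank E))))%MM.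

Lemma phi_varE (K : fieldType) i : phi_var K e i = 'X_[psiG i].
Proof.
rewrite /phi_var /psiG -mprodXE; apply: eq_bigr => E _.
by rewrite /s_var /t_var; case: in_cut.
Qed.

Definition cnt (m : 'X_{1..nq V}) (E : edge e) (b : bool) :=
  (\sum_(i < nq V) m i * (in_cut (enum_val i) E == b))%N.

Lemma lr_ne k (x y : 'I_k) : (lshift k x == rshift k y) = false.
Proof. by apply/negbTE/eqP => /(congr1 val) /= h; have := ltn_ord x; lia. Qed.
Lemma rl_ne k (x y : 'I_k) : (rshift k x == lshift k y) = false.
Proof. by apply/negbTE/eqP => /(congr1 val) /= h; have := ltn_ord y; lia. Qed.
Lemma ll_eq k (x y : 'I_k) : (lshift k x == lshift k y) = (x == y).
Proof. exact/inj_eq/lshift_inj. Qed.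
Lemma rr_eq k (x y : 'I_k) : (rshift k x == rshift k y) = (x == y).
Proof. exact/inj_eq/rshift_inj. Qed.

Lemma psiG_l i E : psiG i (lshift (ne e) (enum_rank E)) = (in_cut (enum_val i) E : nat).
Proof.
rewrite /psiG mnm_sumE (bigD1 E) //= big1 ?addn0.
  by case: in_cut; rewrite mnm1E ?ll_eq ?rl_ne ?eqxx.
move=> E' ne'; case: in_cut; rewrite mnm1E ?ll_eq ?rl_ne //.
by rewrite (inj_eq enum_rank_inj) (negbTE ne').
Qed.

Lemma psiG_r i E : psiG i (rshift (ne e) (enum_rank E)) = (~~ in_cut (enum_val i) E : nat).
Proof.
rewrite /psiG mnm_sumE (bigD1 E) //= big1 ?addn0.
  by case: in_cut; rewrite mnm1E ?rr_eq ?lr_ne ?eqxx.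
move=> E' ne'; case: in_cut; rewrite mnm1E ?rr_eq ?lr_ne //.
by rewrite (inj_eq enum_rank_inj) (negbTE ne').
Qed.

Lemma Phi_coord (m : 'X_{1..nq V}) (j : 'I_(ne e + ne e)) :
  Phi psiG m j = (\sum_(i < nq V) psiG i j * m i)%N.
Proof. by rewrite /Phi mnm_sumE; apply: eq_bigr => i _; rewrite mulmnE. Qed.

Lemma Phi_l m E : Phi psiG m (lshift (ne e) (enum_rank E)) = cnt m E true.
Proof.
rewrite Phi_coord /cnt; apply: eq_bigr => i _; rewrite psiG_l mulnC.
by case: in_cut.
Qed.

Lemma Phi_r m E : Phi psiG m (rshift (ne e) (enum_rank E)) = cnt m E false.
Proof.
rewrite Phi_coord /cnt; apply: eq_bigr => i _; rewrite psiG_r mulnC.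
by case: in_cut.
Qed.

Lemma Phi_eq m m' : Phi psiG m = Phi psiG m' <-> forall E b, cnt m E b = cnt m' E b.
Proof.
split => [H E [] | H].
- by rewrite -!Phi_l H.
- by rewrite -!Phi_r H.
apply/mnmP => j; rewrite -(splitK j); case: (split j) => x /=.
  by rewrite -(enum_valK x) !Phi_l H.
by rewrite -(enum_valK x) !Phi_r H.
Qed.

Lemma cnt_deg m E : (cnt m E true + cnt m E false)%N = mdeg m.
Proof.
rewrite /cnt -big_split mdegE /=; apply: eq_bigr => i _.
by case: in_cut; rewrite /= ?muln1 ?muln0 ?addn0.
Qed.

Lemma Phi_homog m m' : (0 < ne e)%N -> Phi psiG m = Phi psiG m' -> mdeg m = mdeg m'.
Proof.
move=> hne /Phi_eq H.
have E : edge e by exact: enum_val (Ordinal hne).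
by rewrite -!(cnt_deg _ E) !H.
Qed.

Lemma Phi_const m m' : ne e = 0%N -> Phi psiG m = Phi psiG m'.
Proof.
move=> h; apply/Phi_eq => E; have h' : #|{: edge e}| = 0%N := h.
by have := card0_eq h' E; rewrite !inE.
Qed.
End Graph.
Section Parts.
Variable V : finType.

Definition rep (P : upart V) : {set V} := odflt set0 [pick A | val P == [set A; ~: A]].

Lemma repP P : val P = [set rep P; ~: rep P].
Proof.
rewrite /rep; case: pickP => [A /eqP //|H].
have := valP P; case/existsP => A /eqP hA; by have := H A; rewrite hA eqxx.
Qed.

Lemma mkup_proof (A : {set V}) : is_upart [set A; ~: A].
Proof. by apply/existsP; exists A. Qed.

Definition mkup A : upart V := exist _ [set A; ~: A] (mkup_proof A).

Lemma mkup_rep P : mkup (rep P) = P.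
Proof. by apply/val_inj; rewrite /= -repP. Qed.

Lemma mkupC A : mkup (~: A) = mkup A.
Proof. by apply/val_inj; rewrite /= setCK setUC. Qed.

Lemma rep_mkup A : rep (mkup A) = A \/ rep (mkup A) = ~: A.
Proof.
have : rep (mkup A) \in val (mkup A) by rewrite repP !inE eqxx.
by case/set2P; [left|right].
Qed.

Definition sep (A E : {set V}) := [exists i in E, exists j in E, (i \in A) && (j \notin A)].

Lemma in_cut_sep (e : rel V) P (E : edge e) A :
  val P = [set A; ~: A] -> in_cut P E = sep A (val E).
Proof.
move=> hP; rewrite /in_cut /sep hP; apply/existsP/existsP.
- case=> i /andP[iE /existsP[j /andP[jE /existsP[B /andP[/set2P[]-> /andP[iB jB]]]]]].
    by exists i; rewrite iE; apply/existsP; exists j; rewrite jE iB jB.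
  exists j; rewrite jE; apply/existsP; exists i; rewrite iE.
  by move: iB jB; rewrite !inE negbK => -> ->.
- case=> i /andP[iE /existsP[j /andP[jE H]]]; exists i; rewrite iE; apply/existsP.
  by exists j; rewrite jE; apply/existsP; exists A; rewrite !inE eqxx.
Qed.
End Parts.

Lemma push_sum n k (r : 'I_n -> 'I_k) (m : 'X_{1..n}) (g : 'I_k -> nat) :
  (\sum_(i < n) m i * g (r i) = \sum_(j < k) push r m j * g j)%N.
Proof.
rewrite (partition_big r xpredT) //=; apply: eq_bigr => j _.
by rewrite pushE big_distrl /=; apply: eq_bigr => i /eqP <-.
Qed.

Section Union.
Variables (V1 V2 : finType) (e1 : rel V1) (e2 : rel V2).
Local Notation V := (V1 + V2)%type.
Local Notation G := (disj_union e1 e2).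

Definition restr1 (P : upart V) : upart V1 := mkup (inl @^-1: rep P).
Definition restr2 (P : upart V) : upart V2 := mkup (inr @^-1: rep P).
Definition glue (P1 : upart V1) (P2 : upart V2) : upart V :=
  mkup (inl @: rep P1 :|: inr @: rep P2).

Lemma pre_inl (A1 : {set V1}) (A2 : {set V2}) :
  inl @^-1: (inl @: A1 :|: inr @: A2) = A1 :> {set V1}.
Proof.
apply/setP => x; rewrite !inE (mem_imset _ _ (@inl_inj _ _)).
by case: (x \in A1) => //=; apply/negbTE/imsetP => -[y _].
Qed.

Lemma pre_inr (A1 : {set V1}) (A2 : {set V2}) :
  inr @^-1: (inl @: A1 :|: inr @: A2) = A2 :> {set V2}.
Proof.
apply/setP => x; rewrite !inE (mem_imset _ _ (@inr_inj _ _)).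
by rewrite orbC; case: (x \in A2) => //=; apply/negbTE/imsetP => -[y _].
Qed.

Lemma restr1_glue P1 P2 : restr1 (glue P1 P2) = P1.
Proof.
rewrite /restr1 /glue; case: (rep_mkup (inl @: rep P1 :|: inr @: rep P2)) => ->.
  by rewrite pre_inl mkup_rep.
by rewrite preimsetC pre_inl mkupC mkup_rep.
Qed.

Lemma restr2_glue P1 P2 : restr2 (glue P1 P2) = P2.
Proof.
rewrite /restr2 /glue; case: (rep_mkup (inl @: rep P1 :|: inr @: rep P2)) => ->.
  by rewrite pre_inr mkup_rep.
by rewrite preimsetC pre_inr mkupC mkup_rep.
Qed.

Lemma liftE1_proof (E1 : edge e1) : is_edge G (inl @: val E1).
Proof.
case: E1 => E hE /=; move: hE => /existsP[i /existsP[j /andP[eij /eqP ->]]].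
apply/existsP; exists (inl i); apply/existsP; exists (inl j); rewrite /= eij /=.
by rewrite imsetU1 imset_set1.
Qed.
Definition liftE1 E1 : edge G := exist (fun E => is_edge G E) _ (liftE1_proof E1).

Lemma liftE2_proof (E2 : edge e2) : is_edge G (inr @: val E2).
Proof.
case: E2 => E hE /=; move: hE => /existsP[i /existsP[j /andP[eij /eqP ->]]].
apply/existsP; exists (inr i); apply/existsP; exists (inr j); rewrite /= eij /=.
by rewrite imsetU1 imset_set1.
Qed.
Definition liftE2 E2 : edge G := exist (fun E => is_edge G E) _ (liftE2_proof E2).

Lemma edgeG_cases (E : edge G) : (exists E1, E = liftE1 E1) \/ (exists E2, E = liftE2 E2).
Proof.
case: E => E hE; have H := hE; move/existsP: H => [x /existsP[y /andP[exy /eqP eE]]].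
case: x y exy eE => [i|i] [j|j] //= eij eE.
- left; have h1 : is_edge e1 [set i; j].
    by apply/existsP; exists i; apply/existsP; exists j; rewrite eij eqxx.
  exists (exist (fun E => is_edge _ E) _ h1); apply/val_inj; by rewrite /= eE imsetU1 imset_set1.
- right; have h1 : is_edge e2 [set i; j].
    by apply/existsP; exists i; apply/existsP; exists j; rewrite eij eqxx.
  exists (exist (fun E => is_edge _ E) _ h1); apply/val_inj; by rewrite /= eE imsetU1 imset_set1.
Qed.

Lemma sep_inl (A : {set V}) (E1 : {set V1}) : sep A (inl @: E1) = sep (inl @^-1: A) E1.
Proof.
apply/existsP/existsP.
- case=> x /andP[/imsetP[i iE ->] /existsP[y /andP[/imsetP[j jE ->] H]]].
  by exists i; rewrite iE; apply/existsP; exists j; rewrite jE !inE.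
- case=> i /andP[iE /existsP[j /andP[jE H]]]; exists (inl i); rewrite imset_f //.
  by apply/existsP; exists (inl j); rewrite imset_f //; move: H; rewrite !inE.
Qed.

Lemma sep_inr (A : {set V}) (E2 : {set V2}) : sep A (inr @: E2) = sep (inr @^-1: A) E2.
Proof.
apply/existsP/existsP.
- case=> x /andP[/imsetP[i iE ->] /existsP[y /andP[/imsetP[j jE ->] H]]].
  by exists i; rewrite iE; apply/existsP; exists j; rewrite jE !inE.
- case=> i /andP[iE /existsP[j /andP[jE H]]]; exists (inr i); rewrite imset_f //.
  by apply/existsP; exists (inr j); rewrite imset_f //; move: H; rewrite !inE.
Qed.

Lemma in_cut_lift1 P E1 : in_cut P (liftE1 E1) = in_cut (restr1 P) E1.
Proof.
rewrite (in_cut_sep _ (repP P)) (@in_cut_sep _ _ (restr1 P) E1 (inl @^-1: rep P)) //=.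
by rewrite sep_inl.
Qed.

Lemma in_cut_lift2 P E2 : in_cut P (liftE2 E2) = in_cut (restr2 P) E2.
Proof.
rewrite (in_cut_sep _ (repP P)) (@in_cut_sep _ _ (restr2 P) E2 (inr @^-1: rep P)) //=.
by rewrite sep_inr.
Qed.

Definition rho1 (i : 'I_(nq V)) : 'I_(nq V1) := enum_rank (restr1 (enum_val i)).
Definition rho2 (i : 'I_(nq V)) : 'I_(nq V2) := enum_rank (restr2 (enum_val i)).
Definition sG (a : 'I_(nq V1)) (b : 'I_(nq V2)) : 'I_(nq V) :=
  enum_rank (glue (enum_val a) (enum_val b)).

Lemma rs1 a b : rho1 (sG a b) = a.
Proof. by rewrite /rho1 /sG enum_rankK restr1_glue enum_valK. Qed.
Lemma rs2 a b : rho2 (sG a b) = b.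
Proof. by rewrite /rho2 /sG enum_rankK restr2_glue enum_valK. Qed.

Lemma cnt_lift1 m E1 b : cnt m (liftE1 E1) b = cnt (push rho1 m) E1 b.
Proof.
rewrite /cnt -(push_sum rho1 m (fun j => (in_cut (enum_val j) E1 == b) : nat)).
by apply: eq_bigr => i _; rewrite in_cut_lift1 /rho1 enum_rankK.
Qed.

Lemma cnt_lift2 m E2 b : cnt m (liftE2 E2) b = cnt (push rho2 m) E2 b.
Proof.
rewrite /cnt -(push_sum rho2 m (fun j => (in_cut (enum_val j) E2 == b) : nat)).
by apply: eq_bigr => i _; rewrite in_cut_lift2 /rho2 enum_rankK.
Qed.

Lemma PhiG_eq m m' : Phi (psiG G) m = Phi (psiG G) m' <->
  Phi (psiG e1) (push rho1 m) = Phi (psiG e1) (push rho1 m') /\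
  Phi (psiG e2) (push rho2 m) = Phi (psiG e2) (push rho2 m').
Proof.
rewrite !Phi_eq; split.
  by move=> H; split => E b; rewrite -?cnt_lift1 -?cnt_lift2 H.
move=> [H1 H2] E b; case: (edgeG_cases E) => [[E1 ->]|[E2 ->]].
  by rewrite !cnt_lift1 H1.
by rewrite !cnt_lift2 H2.
Qed.
End Union.
Lemma Pconst n (le : rel 'X_{1..n}) : monomial_order le -> Pfib (fun _ : 'X_{1..n} => tt) le.
Proof.
move=> [rf an tr to [z0 cp]] m m' _ lm nm.
have nz : m != 0%MM.
  apply/eqP => e0; case/eqP: nm; rewrite e0 in lm *; apply: an; by rewrite lm z0.
have [i mi] := mnm_ne0 nz.
exists U_(i)%MM, 0%MM; split => //.
- exact: sqU.
- by apply/sqfreeP => t; rewrite mnm0E.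
- by rewrite lep1mP -lt0n.
- by rewrite z0 eq_sym mnm1_eq0.
Qed.

Lemma side_order (V : finType) (e : rel V) (L : rel 'X_{1..nq V}) : monomial_order L -> Pfib (Phi (psiG e)) L ->
  exists L', monomial_order L' /\ Pfib (fun x => (Phi (psiG e) x, mdeg x)) L'.
Proof.
move=> mo P; case: (posnP (ne e)) => hne.
  have hq : (0 < nq V)%N by apply/card_gt0P; exists (mkup set0).
  exists (@le0 (nq V)); split; first exact: mo_le0.
  apply: Pfib_eqv (Pdeg (z := Ordinal hq) erefl) => x y.
  by split => [->|[]//]; rewrite (Phi_const x y hne).
exists L; split => //; apply: Pfib_eqv P => x y.
by split => [E|[]//]; rewrite E (Phi_homog hne E).
Qed.

Unset Implicit Arguments.
Theorem corollary5p3 (K : fieldType) (V1 V2 : finType)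
  (e1 : rel V1) (e2 : rel V2) :
  simple_graph e1 -> simple_graph e2 ->
  has_sqfree_gb (cut_ideal K e1) ->
  has_sqfree_gb (cut_ideal K e2) ->
  has_sqfree_gb (cut_ideal K (disj_union e1 e2)).
Proof.
move=> _ _ H1 H2.
have [L1 [mo1 P1]] := GB_to_P (@phi_varE _ e1 K) H1.
have [L2 [mo2 P2]] := GB_to_P (@phi_varE _ e2 K) H2.
have [A1 [moA1 PA1]] := side_order mo1 P1.
have [A2 [moA2 PA2]] := side_order mo2 P2.
have HG := @P_to_GB K _ _ (psiG (disj_union e1 e2)) (phi_var K (disj_union e1 e2))
  (@phi_varE _ (disj_union e1 e2) K).
case: (posnP (ne e1)) => h1; case: (posnP (ne e2)) => h2.
- apply: (HG _ (@mo_Tord _)); apply: Pfib_eqv (Pconst (@mo_Tord _)) => x y.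
  split => // _; apply/PhiG_eq; split; exact: Phi_const.
all: apply: (HG _ (mo_lec (@rho1 V1 V2) (@rho2 V1 V2) (@sG V1 V2) moA1 moA2)).
all: have hA1 : forall x y : 'X_{1..nq V1},
   (Phi (psiG e1) x, mdeg x) = (Phi (psiG e1) y, mdeg y) -> mdeg x = mdeg y by move=> x y [].
all: have hA2 : forall x y : 'X_{1..nq V2},
   (Phi (psiG e2) x, mdeg x) = (Phi (psiG e2) y, mdeg y) -> mdeg x = mdeg y by move=> x y [].
all: apply: Pfib_eqv (core (@rs1 V1 V2) (@rs2 V1 V2) hA1 hA2 PA1 PA2).
all: move=> x y; rewrite /Fc; split.
all: try (by move=> [E1 _ E2 _]; apply/PhiG_eq; split).
all: move/PhiG_eq => [E1 E2]; rewrite E1 E2 !push_mdeg.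
all: first [ by have := Phi_homog h1 E1; rewrite !push_mdeg => -> | by have := Phi_homog h2 E2; rewrite !push_mdeg => -> ].
Qed.
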